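(* Let $B_1,\dots,B_n$ be components with pairwise disjoint action sets and $\gamma$ a set of interactions over them. For each action $a\in\mathit{Act}(\gamma)$ let $k_a\ge0$ be a constant such that, in every execution of the component owning $a$, any two consecutive executions of $a$ are separated by at least $k_a$ time units. Let $\mathit{CI}(B_i^h)$ be the component invariants and $\mathit{II}(\gamma)$ the interaction invariant. Then $\Phi=\exists\mathcal{H}_A\exists\mathcal{H}_\gamma.\big(\bigwedge_i\mathit{CI}(B_i^h)\wedge\mathit{II}(\gamma)\wedge\mathcal{E}^*(\gamma)\wedge\mathcal{S}(\gamma)\big)$ is an invariant of $\|_\gamma B_i$.
   Context: Components and semantics: a component is a timed automaton $B=(L,A,\mathcal{X},T,\mathsf{tpc},s_0)$ with locations $L$, actions $A$, clocks $\mathcal{X}$, edges $(l,(a,g,r),l')\in T$ (action, clock-constraint guard, reset set), time progress conditions $\mathsf{tpc}(l)$, initial configuration $s_0=(l_0,c_0)$. States $(l,\mathbf{v})$, $\mathbf{v}$ a valuation in $\mathbb{R}_{\ge0}$; time transitions $(l,\mathbf{v})\xrightarrow{\delta}(l,\mathbf{v}+\delta)$ if $\mathsf{tpc}(l)$ holds along $[0,\delta]$; discrete transitions $(l,\mathbf{v})\xrightarrow{a}(l',\mathbf{v}[r])$ if $(l,(a,g,r),l')\in T$, $\mathbf{v}\models g$, $\mathbf{v}[r]\models\mathsf{tpc}(l')$; initial states $(l_0,\mathbf{v}_0)$ with $\mathbf{v}_0\models c_0$. A state predicate is an invariant if it holds in every reachable state. Systems: for components $B_i$ with pairwise disjoint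 action sets $A_i$, an interaction is a nonempty $\alpha\subseteq\bigcup_iA_i$ with at most one action per component; $\mathit{Act}(\gamma)=\bigcup_{\alpha\in\gamma}\alpha$. $\|_\gamma B_i$ has locations $\times_iL_i$, clocks $\bigcup_i\mathcal{X}_i$, conjunction of tpc's and initial constraints, and for each $\alpha=\{a_i\}_{i\in I}\in\gamma$ and edges $(l_i,(a_i,g_i,r_i),l'_i)\in T_i$ ($i\in I$) a joint edge with guard $\bigwedge_{i\in I}g_i$, reset $\bigcup_{i\in I}r_i$, moving exactly the components in $I$. History clocks: $B^h$ adds fresh clocks $h_0$ and $h_a$ ($a\in A$), adds $h_a$ to the resets of each edge labelled $a$, initial constraint $c_0\wedge h_0=0\wedge\bigwedge_{a\in A}h_a>0$; $h_0$ is shared by all components and never reset nor tested; $\mathcal{H}_A$ is the set of $h_0$ and all $h_a$, $a\in\bigcup_iA_i$. Interaction history clocks $\mathcal{H}_\gamma=\{h_\alpha\mid\alpha\in\gamma\}$ (in the extended system they are reset exactly when $\alpha$ is executed). $\exists S$ quantifies over nonnegative reals. Invariants used: $\mathit{CI}(B^h)$ is the disjunction of $\mathit{at}(l)\wedge\zeta$ over all symbolic states $(l,\zeta)$ reachable in the (normalised) zone graph of $B^h$; it is an invariant of $B^h$. $\mathit{II}(\gamma)$ is a predicate over locations only which is an invariant of $\|_\gamma B_i$. Glue constraints: $\mathcal{E}^*(\gamma)=\bigwedge_{a\in\mathit{Act}(\gamma)}h_a=\min_{\alpha\in\gamma,\,a\in\alpha}h_\alpha$ and $\mathcal{S}(\gamma)=\bigwedge_{a\in\mathit{Act}(\gamma)}\bigwedge_{\alpha\ne\beta\in\gamma,\,a\in\alpha\cap\beta}|h_\alpha-h_\beta|\ge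 k_a$. *)

(* Defs.v *)
From Stdlib Require Import Reals List.
Import ListNotations.
Open Scope R_scope.

Inductive cmp := CLt | CLe | CEq | CGe | CGt.

Definition cmp_sem (o : cmp) (x y : R) : Prop :=
  match o with
  | CLt => x < y | CLe => x <= y | CEq => x = y | CGe => x >= y | CGt => x > y
  end.

Inductive cc (X : Type) : Type :=
| CCTrue
| CCAtom (x : X) (o : cmp) (c : nat)
| CCDiff (x y : X) (o : cmp) (c : nat)
| CCAnd (g1 g2 : cc X).
Arguments CCTrue {X}.
Arguments CCAtom {X} x o c.
Arguments CCDiff {X} x y o c.
Arguments CCAnd {X} g1 g2.

Fixpoint ccsat {X : Type} (g : cc X) (v : X -> R) : Prop :=
  match g with
  | CCTrue => True
  | CCAtom x o c => cmp_sem o (v x) (INR c)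
  | CCDiff x y o c => cmp_sem o (v x - v y) (INR c)
  | CCAnd g1 g2 => ccsat g1 v /\ ccsat g2 v
  end.

Fixpoint cc_map {X Y : Type} (f : X -> Y) (g : cc X) : cc Y :=
  match g with
  | CCTrue => CCTrue
  | CCAtom x o c => CCAtom (f x) o c
  | CCDiff x y o c => CCDiff (f x) (f y) o c
  | CCAnd g1 g2 => CCAnd (cc_map f g1) (cc_map f g2)
  end.

Record TA : Type := {
  loc : Type; act : Type; clk : Type;
  locs : list loc; locs_all : forall l, In l locs;
  acts : list act; acts_all : forall a, In a acts;
  clks : list clk; clks_all : forall x, In x clks;
  edges : list (loc * act * cc clk * list clk * loc);
  tpc : loc -> cc clk;
  l0 : loc;
  c0 : cc clk }.

Definition shift {X : Type} (v : X -> R) (d : R) : X -> R := fun x => v x + d.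

Definition reset_rel {X : Type} (r : list X) (v v' : X -> R) : Prop :=
  forall x, (In x r -> v' x = 0) /\ (~ In x r -> v' x = v x).

Inductive lab (A : Type) : Type :=
| LDelay (d : R)
| LAct (a : A).
Arguments LDelay {A} d.
Arguments LAct {A} a.

Definition ta_state (B : TA) : Type := (loc B * (clk B -> R))%type.

Inductive ta_step (B : TA) : ta_state B -> lab (act B) -> ta_state B -> Prop :=
| ts_delay (l : loc B) (v : clk B -> R) (d : R) :
    0 <= d ->
    (forall t, 0 <= t <= d -> ccsat (tpc B l) (shift v t)) ->
    ta_step B (l, v) (LDelay d) (l, shift v d)
| ts_act (l : loc B) (a : act B) (g : cc (clk B)) (r : list (clk B)) (l' : loc B)
         (v v' : clk B -> R) :
    In (l, a, g, r, l') (edges B) ->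
    ccsat g v -> reset_rel r v v' -> ccsat (tpc B l') v' ->
    ta_step B (l, v) (LAct a) (l', v').

Definition ta_init (B : TA) (s : ta_state B) : Prop :=
  fst s = l0 B /\ (forall x, 0 <= snd s x) /\ ccsat (c0 B) (snd s).

Inductive exec {S Lb : Type} (step : S -> Lb -> S -> Prop) : S -> list Lb -> S -> Prop :=
| ex_nil (s : S) : exec step s [] s
| ex_cons (s : S) (a : Lb) (s' : S) (w : list Lb) (s'' : S) :
    step s a s' -> exec step s' w s'' -> exec step s (a :: w) s''.

Definition reachable {S Lb : Type} (init : S -> Prop) (step : S -> Lb -> S -> Prop)
  (s : S) : Prop :=
  exists s0 w, init s0 /\ exec step s0 w s.

Definition invariant {S Lb : Type} (init : S -> Prop) (step : S -> Lb -> S -> Prop)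
  (P : S -> Prop) : Prop :=
  forall s, reachable init step s -> P s.

Fixpoint delay_sum {A : Type} (w : list (lab A)) : R :=
  match w with
  | [] => 0
  | LDelay d :: w' => d + delay_sum w'
  | LAct _ :: w' => delay_sum w'
  end.

Definition min_sep (B : TA) (a : act B) (k : R) : Prop :=
  forall (s0 s' : ta_state B) (w1 w : list (lab (act B))),
    ta_init B s0 ->
    exec (ta_step B) s0 (w1 ++ LAct a :: w ++ [LAct a]) s' ->
    ~ In (LAct a) w ->
    k <= delay_sum w.

Inductive hclk (X A : Type) : Type :=
| HOrig (x : X)
| H0
| HAct (a : A).
Arguments HOrig {X A} x.
Arguments H0 {X A}.
Arguments HAct {X A} a.

Definition hclks (B : TA) : list (hclk (clk B) (act B)) :=
  map HOrig (clks B) ++ H0 :: map HAct (acts B).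

Lemma hclks_all (B : TA) : forall x, In x (hclks B).
Proof.
  intros [x| |a]; unfold hclks; apply in_or_app.
  - left; apply in_map, clks_all.
  - right; left; reflexivity.
  - right; right; apply in_map, acts_all.
Qed.

Definition hist_edge (B : TA) (e : loc B * act B * cc (clk B) * list (clk B) * loc B)
  : loc B * act B * cc (hclk (clk B) (act B)) * list (hclk (clk B) (act B)) * loc B :=
  match e with
  | (l, a, g, r, l') => (l, a, cc_map HOrig g, HAct a :: map HOrig r, l')
  end.

Definition hist_c0 (B : TA) : cc (hclk (clk B) (act B)) :=
  CCAnd (cc_map HOrig (c0 B))
    (CCAnd (CCAtom H0 CEq 0)
       (fold_right (fun a g => CCAnd (CCAtom (HAct a) CGt 0) g) CCTrue (acts B))).

Definition hist (B : TA) : TA := {|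
  loc := loc B; act := act B; clk := hclk (clk B) (act B);
  locs := locs B; locs_all := locs_all B;
  acts := acts B; acts_all := acts_all B;
  clks := hclks B; clks_all := hclks_all B;
  edges := map (hist_edge B) (edges B);
  tpc := fun l => cc_map HOrig (tpc B l);
  l0 := l0 B;
  c0 := hist_c0 B |}.

(* Actions of the system are pairs (i, a) with a an action of B_i (so the action
   sets are disjoint by construction); an interaction picks at most one action
   per component. *)
Definition interaction {I : Type} (B : I -> TA) : Type := forall i, option (act (B i)).

Definition sys_state {I : Type} (B : I -> TA) : Type :=
  ((forall i, loc (B i)) * ({i : I & clk (B i)} -> R))%type.

Definition proj {I : Type} {B : I -> TA} (v : {i : I & clk (B i)} -> R) (i : I)
  : clk (B i) -> R := fun x => v (existT _ i x).

Definition sys_tpc {I : Type} (B : I -> TA) (l : forall i, loc (B i))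
  (v : {i : I & clk (B i)} -> R) : Prop :=
  forall i, ccsat (tpc (B i) (l i)) (proj v i).

Definition sys_init {I : Type} (B : I -> TA) (s : sys_state B) : Prop :=
  (forall i, fst s i = l0 (B i)) /\ (forall c, 0 <= snd s c) /\
  (forall i, ccsat (c0 (B i)) (proj (snd s) i)).

Definition edge_of (T : TA) : Type := (loc T * act T * cc (clk T) * list (clk T) * loc T)%type.

Inductive sys_step {I : Type} (B : I -> TA) (gamma : interaction B -> Prop)
  : sys_state B -> lab (interaction B) -> sys_state B -> Prop :=
| ss_delay (l : forall i, loc (B i)) (v : {i : I & clk (B i)} -> R) (d : R) :
    0 <= d ->
    (forall t, 0 <= t <= d -> sys_tpc B l (shift v t)) ->
    sys_step B gamma (l, v) (LDelay d) (l, shift v d)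
| ss_act (alpha : interaction B) (e : forall i, option (edge_of (B i)))
         (l l' : forall i, loc (B i)) (v v' : {i : I & clk (B i)} -> R) :
    gamma alpha ->
    (forall i,
       match alpha i, e i with
       | None, None => l' i = l i /\ (forall x, proj v' i x = proj v i x)
       | Some a, Some (li, ai, g, r, li') =>
           In (li, ai, g, r, li') (edges (B i)) /\ li = l i /\ ai = a /\ li' = l' i /\
           ccsat g (proj v i) /\ reset_rel r (proj v i) (proj v' i)
       | _, _ => False
       end) ->
    sys_tpc B l' v' ->
    sys_step B gamma (l, v) (LAct alpha) (l', v').

Definition inAct {I : Type} {B : I -> TA} (gamma : interaction B -> Prop) (i : I)
  (a : act (B i)) : Prop :=
  exists alpha, gamma alpha /\ alpha i = Some a.

Definition hval {X A : Type} (v : X -> R) (h0 : R) (ha : A -> R) : hclk X A -> R :=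
  fun c => match c with HOrig x => v x | H0 => h0 | HAct a => ha a end.

Definition Estar {I : Type} {B : I -> TA} (gamma : interaction B -> Prop)
  (ha : forall i, act (B i) -> R) (hg : interaction B -> R) : Prop :=
  forall i a, inAct gamma i a ->
    exists alpha, gamma alpha /\ alpha i = Some a /\ ha i a = hg alpha /\
      (forall beta, gamma beta -> beta i = Some a -> hg alpha <= hg beta).

Definition Sep {I : Type} {B : I -> TA} (gamma : interaction B -> Prop)
  (k : forall i, act (B i) -> R) (hg : interaction B -> R) : Prop :=
  forall i a alpha beta, gamma alpha -> gamma beta -> alpha <> beta ->
    alpha i = Some a -> beta i = Some a -> Rabs (hg alpha - hg beta) >= k i a.

Definition Phi {I : Type} (B : I -> TA) (gamma : interaction B -> Prop)
  (k : forall i, act (B i) -> R)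
  (CI : forall i, loc (hist (B i)) -> (clk (hist (B i)) -> R) -> Prop)
  (II : (forall i, loc (B i)) -> Prop) (s : sys_state B) : Prop :=
  exists (h0 : R) (ha : forall i, act (B i) -> R) (hg : interaction B -> R),
    0 <= h0 /\ (forall i a, 0 <= ha i a) /\ (forall alpha, 0 <= hg alpha) /\
    (forall i, CI i (fst s i) (hval (proj (snd s) i) h0 (ha i))) /\
    II (fst s) /\ Estar gamma ha hg /\ Sep gamma k hg.

(* Main.v *)
Require Import Defs.
From Stdlib Require Import Reals List Lra Lia Cantor.
From Stdlib Require Import ClassicalEpsilon FunctionalExtensionality Classical.
Import ListNotations.
Open Scope R_scope.

Lemma exec_snoc {S Lb : Type} (step : S -> Lb -> S -> Prop) s w s' a s'' :
  exec step s w s' -> step s' a s'' -> exec step s (w ++ [a]) s''.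
Proof.
  induction 1; intros Hst; simpl.
  - econstructor; [exact Hst | constructor].
  - econstructor; [exact H | auto].
Qed.

Inductive rch {S Lb : Type} (init : S -> Prop) (step : S -> Lb -> S -> Prop) : S -> Prop :=
| rch_init s : init s -> rch init step s
| rch_step s a s' : rch init step s -> step s a s' -> rch init step s'.

Lemma reachable_rch {S Lb : Type} (init : S -> Prop) (step : S -> Lb -> S -> Prop) s :
  reachable init step s -> rch init step s.
Proof.
  intros [s0 [w [Hi He]]].
  assert (H : forall s1, rch init step s1 -> forall w s2, exec step s1 w s2 -> rch init step s2).
  { intros s1 Hr w0 s2 Hx. revert Hr. induction Hx; intros Hr; [exact Hr|].
    apply IHHx. eapply rch_step; eauto. }
  eapply H; [constructor; exact Hi | exact He].
Qed.

Lemma reachable_snoc {S Lb : Type} (init : S -> Prop) (step : S -> Lb -> S -> Prop) s a s' :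
  reachable init step s -> step s a s' -> reachable init step s'.
Proof.
  intros [s0 [w [Hi He]]] Hs. exists s0, (w ++ [a]). split; auto. eapply exec_snoc; eauto.
Qed.

Lemma delay_sum_app {A : Type} (w1 w2 : list (lab A)) :
  delay_sum (w1 ++ w2) = delay_sum w1 + delay_sum w2.
Proof.
  induction w1 as [|x w1 IH]; simpl; [ring|]. destruct x; rewrite IH; ring.
Qed.

Lemma ccsat_map_hval {X A : Type} (g : cc X) (v : X -> R) h0 (ha : A -> R) :
  ccsat (cc_map HOrig g) (hval v h0 ha) <-> ccsat g v.
Proof.
  induction g; simpl; try tauto.
Qed.

Lemma ccsat_map_hval_shift {X A : Type} (g : cc X) (v : X -> R) h0 (ha : A -> R) t :
  ccsat (cc_map HOrig g) (shift (hval v h0 ha) t) <-> ccsat g (shift v t).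
Proof.
  induction g; simpl; try tauto; unfold shift; simpl; try tauto.
Qed.

Definition ipos {A : Type} (a : A) : list A -> nat :=
  fix f l := match l with
  | [] => 0%nat
  | x :: l' => if excluded_middle_informative (x = a) then 0%nat else S (f l')
  end.

Lemma ipos_nth {A : Type} (a : A) l d : In a l -> nth (ipos a l) l d = a.
Proof.
  induction l as [|x l IH]; simpl; [tauto|].
  destruct (excluded_middle_informative (x = a)); auto.
  intros [->|H]; [congruence|auto].
Qed.

Lemma ipos_inj {A : Type} (a b : A) l : In a l -> In b l -> ipos a l = ipos b l -> a = b.
Proof.
  intros Ha Hb He. rewrite <- (ipos_nth a l a Ha), <- (ipos_nth b l a Hb), He. reflexivity.
Qed.

Lemma least_nat (P : nat -> Prop) : (exists n, P n) -> exists m, P m /\ forall j, P j -> (m <= j)%nat.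
Proof.
  intros [n Hn]. induction n as [n IH] using (well_founded_induction Wf_nat.lt_wf).
  destruct (classic (exists j, P j /\ (j < n)%nat)) as [[j [Hj Hjn]]|Hno].
  - exact (IH j Hjn Hj).
  - exists n. split; auto. intros j Hj. destruct (Nat.lt_ge_cases j n); auto.
    exfalso; apply Hno; eauto.
Qed.

Definition sumR (l : list R) : R := fold_right Rplus 0 l.

Lemma sumR_ge (l : list R) x : (forall y, In y l -> 0 <= y) -> In x l -> x <= sumR l.
Proof.
  induction l as [|y l IH]; simpl; [tauto|]. intros Hp [->|H].
  - assert (0 <= sumR l). { clear -Hp. induction l; simpl; [lra|].
      assert (0 <= a) by (apply Hp; simpl; auto). assert (0 <= sumR l) by (apply IHl; intros; apply Hp; simpl in *; tauto). lra. }
    lra.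
  - assert (0 <= y) by auto. assert (x <= sumR l) by auto. lra.
Qed.

Lemma INR_sep (n m : nat) : n <> m -> 1 <= Rabs (INR n - INR m).
Proof.
  intros H. destruct (Nat.lt_gt_cases n m) as [[Hl|Hl] _]; auto.
  - apply le_INR in Hl. rewrite S_INR in Hl. rewrite Rabs_minus_sym, Rabs_right; lra.
  - apply le_INR in Hl. rewrite S_INR in Hl. rewrite Rabs_right; lra.
Qed.

Section Main.
Context (I : Type) (Is : list I) (HIs : forall i, In i Is)
  (B : I -> TA)
  (gamma : interaction B -> Prop)
  (k : forall i, act (B i) -> R)
  (Hk : forall i a, inAct gamma i a -> min_sep (B i) a (k i a)).

Definition code (i : I) (alpha : interaction B) : nat :=
  match alpha i with None => 0%nat | Some a => S (ipos a (acts (B i))) end.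

Definition Ecode (alpha : interaction B) : nat :=
  fold_right (fun i acc => S (Cantor.to_nat (code i alpha, acc))) 0%nat Is.

Lemma to_nat_inj (p q : nat * nat) : Cantor.to_nat p = Cantor.to_nat q -> p = q.
Proof. intros H. rewrite <- (Cantor.cancel_of_to p), <- (Cantor.cancel_of_to q), H. reflexivity. Qed.

Lemma Ecode_fold l alpha beta :
  fold_right (fun i acc => S (Cantor.to_nat (code i alpha, acc))) 0%nat l =
  fold_right (fun i acc => S (Cantor.to_nat (code i beta, acc))) 0%nat l ->
  forall i, In i l -> code i alpha = code i beta.
Proof.
  induction l as [|j l IH]; cbn [fold_right In]; [tauto|]. intros He i Hi.
  apply Nat.succ_inj in He. apply to_nat_inj in He. injection He as H1 H2.
  destruct Hi as [<-|Hi]; auto.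
Qed.

Lemma Ecode_inj alpha beta : Ecode alpha = Ecode beta -> alpha = beta.
Proof.
  intros He. apply functional_extensionality_dep. intros i.
  pose proof (Ecode_fold Is alpha beta He i (HIs i)) as Hc. unfold code in Hc.
  destruct (alpha i) as [a|], (beta i) as [b|]; try discriminate; auto.
  injection Hc as Hc. f_equal. eapply ipos_inj; eauto; apply acts_all.
Qed.

Definition K : R :=
  1 + sumR (map (fun i => sumR (map (fun a => Rabs (k i a)) (acts (B i)))) Is).

Lemma sumR_nonneg l : (forall y, In y l -> 0 <= y) -> 0 <= sumR l.
Proof.
  induction l as [|y l IH]; simpl; [lra|]. intros Hp.
  assert (0 <= y) by auto. assert (0 <= sumR l) by auto. lra.
Qed.

Lemma K_ge i a : k i a + 1 <= K.
Proof.
  unfold K.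
  assert (H1 : Rabs (k i a) <= sumR (map (fun a => Rabs (k i a)) (acts (B i)))).
  { apply sumR_ge. - intros y Hy. apply in_map_iff in Hy. destruct Hy as [x [<- _]]. apply Rabs_pos.
    - apply (in_map (fun a => Rabs (k i a))), acts_all. }
  assert (H2 : sumR (map (fun a => Rabs (k i a)) (acts (B i))) <=
     sumR (map (fun i => sumR (map (fun a => Rabs (k i a)) (acts (B i)))) Is)).
  { apply sumR_ge. - intros y Hy. apply in_map_iff in Hy. destruct Hy as [x [<- _]].
      apply sumR_nonneg. intros z Hz. apply in_map_iff in Hz. destruct Hz as [w [<- _]]. apply Rabs_pos.
    - apply (in_map (fun i => sumR (map (fun a => Rabs (k i a)) (acts (B i))))), HIs. }
  pose proof (Rle_abs (k i a)). lra.
Qed.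

Lemma K_pos : 1 <= K.
Proof.
  unfold K. assert (0 <= sumR (map (fun i => sumR (map (fun a => Rabs (k i a)) (acts (B i)))) Is)).
  { apply sumR_nonneg. intros y Hy. apply in_map_iff in Hy. destruct Hy as [x [<- _]].
    apply sumR_nonneg. intros z Hz. apply in_map_iff in Hz. destruct Hz as [w [<- _]]. apply Rabs_pos. }
  lra.
Qed.

Definition C (alpha : interaction B) : R := K * INR (S (Ecode alpha)).

Lemma C_ge alpha : K <= C alpha.
Proof.
  unfold C. pose proof K_pos. rewrite S_INR. pose proof (pos_INR (Ecode alpha)). nra.
Qed.

Lemma C_sep alpha beta : alpha <> beta -> K <= Rabs (C alpha - C beta).
Proof.
  intros Hne. assert (Hn : Ecode alpha <> Ecode beta) by (intro; apply Hne, Ecode_inj; auto).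
  pose proof (INR_sep _ _ Hn) as H. pose proof K_pos.
  unfold C. rewrite !S_INR.
  replace (K * (INR (Ecode alpha) + 1) - K * (INR (Ecode beta) + 1)) with
    (K * (INR (Ecode alpha) - INR (Ecode beta))) by ring.
  rewrite Rabs_mult, (Rabs_right K) by lra. nra.
Qed.

Lemma C_mono alpha beta : (Ecode alpha <= Ecode beta)%nat -> C alpha <= C beta.
Proof.
  intros H. unfold C. apply Rmult_le_compat_l; [pose proof K_pos; lra|]. apply le_INR; lia.
Qed.

Lemma init_choice i a : exists r, K <= r /\ (inAct gamma i a -> exists alpha, gamma alpha /\
   alpha i = Some a /\ r = C alpha /\ forall beta, gamma beta -> beta i = Some a -> C alpha <= C beta).
Proof.
  destruct (classic (inAct gamma i a)) as [Hin|Hno].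
  - destruct (least_nat (fun n => exists alpha, gamma alpha /\ alpha i = Some a /\ Ecode alpha = n))
      as [m [[alpha [Hg [Ha Hm]]] Hmin]].
    { destruct Hin as [alpha [Hg Ha]]. eauto. }
    exists (C alpha). split; [apply C_ge|]. intros _. exists alpha. repeat split; auto.
    intros beta Hgb Hb. apply C_mono. rewrite Hm. apply Hmin. eauto.
  - exists K. split; [lra|]. tauto.
Qed.


Definition hreach (i : I) (l : loc (B i)) (v : clk (B i) -> R) (h0 : R) (ha : act (B i) -> R) : Prop :=
  reachable (ta_init (hist (B i))) (ta_step (hist (B i)))
    ((l, hval v h0 ha) : ta_state (hist (B i))).

Definition Inv (s : sys_state B) : Prop :=
  exists (s0 : forall i, ta_state (B i)) (W : forall i, list (lab (act (B i))))
         (h0 : R) (ha : forall i, act (B i) -> R) (hg : interaction B -> R),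
    (forall i, ta_init (B i) (s0 i)) /\
    (forall i, exec (ta_step (B i)) (s0 i) (W i) (fst s i, proj (snd s) i)) /\
    0 <= h0 /\ (forall i a, 0 <= ha i a) /\ (forall alpha, 0 <= hg alpha) /\
    (forall i, hreach i (fst s i) (proj (snd s) i) h0 (ha i)) /\
    (forall i a, (~ In (LAct a) (W i) /\ K <= ha i a) \/
       (exists w1 w, W i = w1 ++ LAct a :: w /\ ~ In (LAct a) w /\ ha i a = delay_sum w)) /\
    Estar gamma ha hg /\ Sep gamma k hg.

Lemma fold_pos {X A : Type} (l : list A) (v : X -> R) h0 (f : A -> R) :
  (forall a, 0 < f a) ->
  ccsat (fold_right (fun a g => CCAnd (CCAtom (HAct a) CGt 0) g) CCTrue l) (hval v h0 f).
Proof.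
  intros Hf. induction l as [|a l IH]; simpl; auto. split; auto. apply Hf.
Qed.

Lemma Inv_init s : sys_init B s -> Inv s.
Proof.
  destruct s as [l v]. intros [Hl [Hv Hc]]. simpl in *.
  set (ha := fun i a => proj1_sig (constructive_indefinite_description _ (init_choice i a))).
  assert (Hha : forall i a, K <= ha i a /\ (inAct gamma i a -> exists alpha, gamma alpha /\
   alpha i = Some a /\ ha i a = C alpha /\ forall beta, gamma beta -> beta i = Some a -> C alpha <= C beta)).
  { intros i a. exact (proj2_sig (constructive_indefinite_description _ (init_choice i a))). }
  clearbody ha. pose proof K_pos as HK.
  exists (fun i => (l i, proj v i)), (fun i => []), 0, ha, C.
  split; [|split; [|split; [|split; [|split; [|split; [|split; [|split]]]]]]].
  - intros i. split; [simpl; auto|]. split; simpl; auto. intros x; apply Hv.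
  - intros i. constructor.
  - lra.
  - intros i a. pose proof (proj1 (Hha i a)). lra.
  - intros alpha. pose proof (C_ge alpha). lra.
  - intros i. exists (l i, hval (proj v i) 0 (ha i)), []. split; [|constructor].
    split; [simpl; auto|]. split.
    + intros [x| |a]; simpl; [apply Hv|lra|pose proof (proj1 (Hha i a)); lra].
    + simpl. split; [apply ccsat_map_hval; auto|]. split; [simpl; auto|].
      apply fold_pos. intros a. pose proof (proj1 (Hha i a)). lra.
  - intros i a. left. split; [simpl; auto|apply Hha].
  - intros i a Hin. destruct (proj2 (Hha i a) Hin) as [alpha [H1 [H2 [H3 H4]]]].
    exists alpha. auto.
  - intros i a alpha beta Ha Hb Hne Hai Hbi.
    pose proof (C_sep alpha beta Hne). pose proof (K_ge i a). lra.
Qed.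


Lemma Inv_delay l v d : Inv (l, v) -> 0 <= d ->
  (forall t, 0 <= t <= d -> sys_tpc B l (shift v t)) -> Inv (l, shift v d).
Proof.
  intros [s0 [W [h0 [ha [hg [Hs0 [Hex [Hh0 [Hha [Hhg [Hre [Hcl [HE HS]]]]]]]]]]]]] Hd Ht.
  simpl in *.
  exists s0, (fun i => W i ++ [LDelay d]), (h0 + d), (fun i a => ha i a + d), (fun alpha => hg alpha + d).
  split; [|split; [|split; [|split; [|split; [|split; [|split; [|split]]]]]]].
  - auto.
  - intros i. simpl. eapply exec_snoc; [apply Hex|]. simpl.
    apply (ts_delay (B i) (l i) (proj v i) d Hd). intros t Htd. apply (Ht t Htd i).
  - lra.
  - intros i a. specialize (Hha i a). lra.
  - intros alpha. specialize (Hhg alpha). lra.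
  - intros i. unfold hreach. eapply reachable_snoc; [apply (Hre i)|].
    assert (Heq : hval (proj (shift v d) i) (h0 + d) (fun a => ha i a + d) =
                  shift (hval (proj v i) h0 (ha i)) d).
    { apply functional_extensionality. intros [x| |a]; reflexivity. }
    simpl. rewrite Heq. apply (ts_delay (hist (B i))); auto.
    intros t Htd. simpl. apply ccsat_map_hval_shift. apply (Ht t Htd i).
  - intros i a. destruct (Hcl i a) as [[Hn Hk1]|[w1 [w [Hw [Hn Ha]]]]].
    + left. split; [|lra]. intros Hin. apply in_app_or in Hin. destruct Hin as [Hin|[Hin|[]]];
      [tauto|discriminate].
    + right. exists w1, (w ++ [LDelay d]). split; [rewrite Hw, <- app_assoc; reflexivity|]. split.
      * intros Hin. apply in_app_or in Hin. destruct Hin as [Hin|[Hin|[]]]; [tauto|discriminate].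
      * rewrite delay_sum_app, Ha. simpl. ring.
  - intros i a Hin. destruct (HE i a Hin) as [alpha [H1 [H2 [H3 H4]]]].
    exists alpha. repeat split; auto. lra. intros beta Hb Hbi. specialize (H4 beta Hb Hbi). lra.
  - intros i a alpha beta Ha Hb Hne Hai Hbi.
    replace (hg alpha + d - (hg beta + d)) with (hg alpha - hg beta) by ring. eauto.
Qed.


Lemma comp_info (alpha : interaction B) (e : forall i, option (edge_of (B i)))
  (l l' : forall i, loc (B i)) (v v' : {i : I & clk (B i)} -> R) :
  (forall i,
       match alpha i, e i with
       | None, None => l' i = l i /\ (forall x, proj v' i x = proj v i x)
       | Some a, Some (li, ai, g, r, li') =>
           In (li, ai, g, r, li') (edges (B i)) /\ li = l i /\ ai = a /\ li' = l' i /\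
           ccsat g (proj v i) /\ reset_rel r (proj v i) (proj v' i)
       | _, _ => False
       end) ->
  forall i, (alpha i = None /\ l' i = l i /\ proj v' i = proj v i) \/
    (exists a g r, alpha i = Some a /\ In (l i, a, g, r, l' i) (edges (B i)) /\
       ccsat g (proj v i) /\ reset_rel r (proj v i) (proj v' i)).
Proof.
  intros H i. specialize (H i). destruct (alpha i) as [a|]; destruct (e i) as [[[[[li ai] g] r] li']|];
    try contradiction.
  - right. destruct H as [H1 [-> [-> [-> [H5 H6]]]]]. exists a, g, r. auto.
  - left. destruct H as [H1 H2]. repeat split; auto. apply functional_extensionality; auto.
Qed.

Definition dec (P : Prop) : bool := if excluded_middle_informative P then true else false.

Lemma Inv_act alpha e l l' v v' : Inv (l, v) -> gamma alpha ->
  (forall i,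
       match alpha i, e i with
       | None, None => l' i = l i /\ (forall x, proj v' i x = proj v i x)
       | Some a, Some (li, ai, g, r, li') =>
           In (li, ai, g, r, li') (edges (B i)) /\ li = l i /\ ai = a /\ li' = l' i /\
           ccsat g (proj v i) /\ reset_rel r (proj v i) (proj v' i)
       | _, _ => False
       end) ->
  sys_tpc B l' v' -> Inv (l', v').
Proof.
  intros [s0 [W [h0 [ha [hg [Hs0 [Hex [Hh0 [Hha [Hhg [Hre [Hcl [HE HS]]]]]]]]]]]]] Hg Hc Ht.
  simpl in *. pose proof (comp_info _ _ _ _ _ _ Hc) as Hci. clear Hc.
  assert (Hfire : forall i a, alpha i = Some a -> k i a <= ha i a).
  { intros i a Hai. destruct (Hci i) as [[Hn _]|[a' [g [r [Ha' [Hed [Hgs Hrs]]]]]]]; [congruence|].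
    rewrite Hai in Ha'. injection Ha' as <-.
    assert (Hin : inAct gamma i a) by (exists alpha; auto).
    destruct (Hcl i a) as [[Hn Hk1]|[w1 [w [Hw [Hn Ha]]]]].
    - pose proof (K_ge i a). lra.
    - rewrite Ha. apply (Hk i a Hin (s0 i) (l' i, proj v' i) w1 w (Hs0 i)); auto.
      replace (w1 ++ LAct a :: w ++ [LAct a]) with (W i ++ [LAct a])
        by (rewrite Hw, <- app_assoc; reflexivity).
      eapply exec_snoc; [apply Hex|]. eapply ts_act; eauto; apply Ht. }
  exists s0, (fun i => match alpha i with None => W i | Some a => W i ++ [LAct a] end), h0,
    (fun i b => if excluded_middle_informative (alpha i = Some b) then 0 else ha i b),
    (fun beta => if excluded_middle_informative (beta = alpha) then 0 else hg beta).
  split; [|split; [|split; [|split; [|split; [|split; [|split; [|split]]]]]]].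
  - auto.
  - intros i. simpl. destruct (Hci i) as [[Hn [Hl Hv]]|[a [g [r [Ha [Hed [Hgs Hrs]]]]]]].
    + rewrite Hn, Hl, Hv. apply Hex.
    + rewrite Ha. eapply exec_snoc; [apply Hex|]. eapply ts_act; eauto; apply Ht.
  - auto.
  - intros i b. destruct excluded_middle_informative; [lra|auto].
  - intros beta. destruct excluded_middle_informative; [lra|auto].
  - intros i. unfold hreach. simpl.
    destruct (Hci i) as [[Hn [Hl Hv]]|[a [g [r [Ha [Hed [Hgs Hrs]]]]]]].
    + rewrite Hl, Hv.
      replace (fun b => if excluded_middle_informative (alpha i = Some b) then 0 else ha i b) with (ha i).
      * apply Hre.
      * apply functional_extensionality. intros b. destruct excluded_middle_informative; congruence.
    + eapply reachable_snoc; [apply (Hre i)|].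
      apply (ts_act (hist (B i)) (l i) a (cc_map HOrig g) (HAct a :: map HOrig r) (l' i)).
      * simpl. apply (in_map (hist_edge (B i)) _ _ Hed).
      * apply ccsat_map_hval. auto.
      * intros [x| |b]; simpl; split.
        -- intros [H|H]; [discriminate|]. apply in_map_iff in H. destruct H as [y [Hy Hy']].
           injection Hy as ->. apply (Hrs x). auto.
        -- intros H. apply (Hrs x). intros Hx. apply H. right. apply in_map. auto.
        -- intros [H|H]; [discriminate|]. apply in_map_iff in H. destruct H as [y [Hy _]]. discriminate.
        -- auto.
        -- intros [H|H].
           ++ injection H as <-. rewrite Ha. destruct excluded_middle_informative; [auto|congruence].
           ++ apply in_map_iff in H. destruct H as [y [Hy _]]. discriminate.
        -- intros H. rewrite Ha. destruct excluded_middle_informative as [E|]; [|auto].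
           injection E as ->. exfalso; apply H; left; auto.
      * apply ccsat_map_hval. apply Ht.
  - intros i b. simpl.
    destruct (Hci i) as [[Hn [Hl Hv]]|[a [g [r [Ha [Hed [Hgs Hrs]]]]]]].
    + rewrite Hn. destruct excluded_middle_informative; [discriminate|]. apply Hcl.
    + rewrite Ha. destruct excluded_middle_informative as [E|NE].
      * injection E as <-. right. exists (W i), []. repeat split; auto.
      * assert (Hab : a <> b) by (intro; apply NE; subst; auto).
        destruct (Hcl i b) as [[Hn Hk1]|[w1 [w [Hw [Hn Hb]]]]].
        -- left. split; auto. intros Hin. apply in_app_or in Hin.
           destruct Hin as [Hin|[Hin|[]]]; [tauto|injection Hin; auto].
        -- right. exists w1, (w ++ [LAct a]). split; [rewrite Hw, <- app_assoc; reflexivity|]. split.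
           ++ intros Hin. apply in_app_or in Hin. destruct Hin as [Hin|[Hin|[]]]; [tauto|injection Hin; auto].
           ++ rewrite delay_sum_app, Hb. simpl. ring.
  - intros i b Hin. destruct excluded_middle_informative as [E|NE].
    + exists alpha. split; [auto|split; [auto|split]].
      * destruct excluded_middle_informative; [auto|congruence].
      * intros beta _ _. repeat destruct excluded_middle_informative; try lra; try congruence; apply Hhg.
    + destruct (HE i b Hin) as [alpha0 [H1 [H2 [H3 H4]]]].
      exists alpha0. split; [auto|split; [auto|split]].
      * destruct excluded_middle_informative; [subst; congruence|auto].
      * intros beta Hb Hbi. destruct excluded_middle_informative; [subst; congruence|].
        destruct excluded_middle_informative; [subst; congruence|auto].
  - intros i a b1 b2 Hb1 Hb2 Hne H1 H2.
    destruct (excluded_middle_informative (b1 = alpha)) as [E1|N1];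
    destruct (excluded_middle_informative (b2 = alpha)) as [E2|N2].
    + congruence.
    + subst b1. destruct (HE i a (ex_intro _ b2 (conj Hb2 H2))) as [a0 [G0 [A0 [E0 M0]]]].
      pose proof (M0 b2 Hb2 H2). pose proof (Hfire i a H1). pose proof (Hhg b2).
      rewrite Rabs_left1 by lra. lra.
    + subst b2. destruct (HE i a (ex_intro _ b1 (conj Hb1 H1))) as [a0 [G0 [A0 [E0 M0]]]].
      pose proof (M0 b1 Hb1 H1). pose proof (Hfire i a H2). pose proof (Hhg b1).
      rewrite Rabs_right by lra. lra.
    + eapply HS; eauto.
Qed.


Lemma Inv_reach s : reachable (sys_init B) (sys_step B gamma) s -> Inv s.
Proof.
  intros H. apply reachable_rch in H. induction H as [s Hi|s lb s' _ IH Hst].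
  - apply Inv_init; auto.
  - destruct Hst as [l v d Hd Ht|alpha e l l' v v' Hg Hc Ht].
    + apply Inv_delay; auto.
    + eapply Inv_act; eauto.
Qed.
End Main.

Theorem corollary2
  (I : Type) (Is : list I) (HIs : forall i, In i Is)
  (B : I -> TA)
  (gamma : interaction B -> Prop)
  (Hgamma_ne : forall alpha, gamma alpha -> exists i, alpha i <> None)
  (k : forall i, act (B i) -> R)
  (Hk0 : forall i a, inAct gamma i a -> 0 <= k i a)
  (Hk : forall i a, inAct gamma i a -> min_sep (B i) a (k i a))
  (CI : forall i, loc (hist (B i)) -> (clk (hist (B i)) -> R) -> Prop)
  (HCI : forall i, invariant (ta_init (hist (B i))) (ta_step (hist (B i)))
                     (fun s => CI i (fst s) (snd s)))
  (II : (forall i, loc (B i)) -> Prop)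
  (HII : invariant (sys_init B) (sys_step B gamma) (fun s => II (fst s))) :
  invariant (sys_init B) (sys_step B gamma) (Phi B gamma k CI II).
Proof.
  intros s Hs.
  destruct (Inv_reach I Is HIs B gamma k Hk s Hs)
    as [s0 [W [h0 [ha [hg [Hs0 [Hex [Hh0 [Hha [Hhg [Hre [Hcl [HE HS]]]]]]]]]]]]].
  exists h0, ha, hg. split; [auto|split; [auto|split; [auto|split; [|split; [|auto]]]]].
  - intros i. apply (HCI i _ (Hre i)).
  - apply (HII s Hs).
Qed.
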